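(* Let $N_1,N_2,N_3\in\mathbb{N}$ with $(N_1,N_2)\neq(0,0)$, and let $\mathcal{G}=\mathcal{G}_{\mathrm{KMA}}(N_1,N_2,N_3)$. Then $\mathcal{G}-\mathcal{G}=\{-\max\mathcal{G},\ldots,\max\mathcal{G}\}$.
   Context: For $a\in\mathbb{Z}$, $b\in\mathbb{N}_+$, $c\in\mathbb{Z}$, $\{a:b:c\}=\{a,a+b,\ldots\}\cap(-\infty,c]$ (empty if $c<a$), $\{a:c\}=\{a:1:c\}$; set sums/differences are elementwise, $\mathcal{A}+c=\{a+c\}$. For $N_1,N_2\in\mathbb{N}$: $\mathcal{D}_1=\{0:N_1-1\}$, $\mathcal{D}_2=\{0:N_1+1:(N_2-1)(N_1+1)\}$, $\mathcal{D}_{\mathrm{CNA}}=\mathcal{D}_1\cup(\mathcal{D}_2+N_1)\cup(\mathcal{D}_1+N_2(N_1+1))$, $M=\max\mathcal{D}_{\mathrm{CNA}}$. For $N_3\in\mathbb{N}$: $\mathcal{D}_3=\{jN_1: j=0,\ldots,N_1\}+\{(i-1)(N_1^2+M+1): i=1,\ldots,N_3\}$ (empty if $N_3=0$). The Kl{\o}ve--Mossige array is $\mathcal{G}_{\mathrm{KMA}}(N_1,N_2,N_3)=\mathcal{D}_{\mathrm{CNA}}\cup(\mathcal{D}_3+2M+1)$. *)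

(* Defs.v *)
(* Finite integer sets are represented as sequences of int. *)
From mathcomp Require Import all_boot all_order all_algebra.
Set Implicit Arguments. Unset Strict Implicit. Unset Printing Implicit Defensive.
Import Order.TTheory GRing.Theory Num.Theory.
Local Open Scope ring_scope.

(* {a:b:c} = {a, a+b, ...} ∩ (-oo, c]  (empty if c < a), for b >= 1.
   Indices k range over 0..|c-a|, which suffices since b >= 1. *)
Definition aprog (a : int) (b : nat) (c : int) : seq int :=
  [seq x <- [seq a + (k%:Z * b%:Z) | k <- iota 0 `|c - a|.+1] | x <= c].

Definition irange (a c : int) : seq int := aprog a 1 c.

Definition sumset (s t : seq int) : seq int := [seq x + y | x <- s, y <- t].
Definition diffset (s t : seq int) : seq int := [seq x - y | x <- s, y <- t].
Definition shift (s : seq int) (c : int) : seq int := [seq x + c | x <- s].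

(* maximum of a finite set of integers; all sets below are nonempty and
   consist of nonnegative integers, so the default 0 is never the answer
   for a non-trivial reason *)
Definition smax (s : seq int) : int := \big[Num.max/0]_(x <- s) x.

Section KMA.
Variables N1 N2 N3 : nat.

Definition D1 : seq int := irange 0 (N1%:Z - 1).
Definition D2 : seq int := aprog 0 N1.+1 ((N2%:Z - 1) * (N1%:Z + 1)).
Definition DCNA : seq int :=
  D1 ++ shift D2 N1%:Z ++ shift D1 (N2%:Z * (N1%:Z + 1)).
Definition MCNA : int := smax DCNA.
Definition D3 : seq int :=
  sumset [seq (j%:Z * N1%:Z) | j <- iota 0 N1.+1]
         [seq ((i%:Z - 1) * (N1%:Z ^+ 2 + MCNA + 1)) | i <- iota 1 N3].
Definition GKMA : seq int := DCNA ++ shift D3 (2 * MCNA + 1).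
End KMA.

(* Main.v *)
Require Import Defs.
From mathcomp Require Import all_boot all_order all_algebra zify ring.
Import Order.TTheory GRing.Theory Num.Theory.
Local Open Scope ring_scope.

Lemma mem_aprog (a c : int) (b : nat) x : (0 < b)%N ->
  x \in aprog a b c <-> exists k : int, 0 <= k /\ x = a + k * b%:Z /\ x <= c.
Proof.
move=> b0; rewrite /aprog mem_filter; split.
  case/andP=> xc /mapP[k _ E]. exists k%:Z. rewrite E in xc *. split; [lia|by split].
case=> k [k0 [-> h]]; apply/andP; split=>//; apply/mapP.
exists `|k|%N; last by rewrite gez0_abs.
rewrite mem_iota /= add0n ltnS. nia.
Qed.

Lemma mem_shift s c x : x \in shift s c <-> exists2 y, y \in s & x = y + c.
Proof. by split; [case/mapP=> y ?->; exists y|case=> y ? ->; apply: map_f]. Qed.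

Lemma mem_diffset s t d : d \in diffset s t <-> exists x y, [/\ x \in s, y \in t & d = x - y].
Proof.
split; first by case/allpairsP=> [[x y] /= [? ? ->]]; exists x, y.
by case=> x [y [? ? ->]]; apply/allpairsP; exists (x, y).
Qed.

Lemma smax_cons x s : smax (x :: s) = Num.max x (smax s).
Proof. by rewrite /smax big_cons. Qed.

Lemma smax_eq s U : (forall x, x \in s -> 0 <= x <= U) -> U \in s -> smax s = U.
Proof.
move=> H HU.
have le : forall s, (forall x, x \in s -> 0 <= x <= U) -> 0 <= U -> smax s <= U.
  elim=> [|y r IH] Hr U0; first by rewrite /smax big_nil.
  rewrite smax_cons ge_max; apply/andP; split.
    by case/andP: (Hr y (mem_head _ _)).
  by apply: IH => // z zr; apply: Hr; rewrite inE zr orbT.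
have ge : forall s, U \in s -> U <= smax s.
  elim=> [//|y r IH]; rewrite inE smax_cons le_max; case/orP=> [/eqP->|/IH->];
   by rewrite ?lexx ?orbT.
have U0 : 0 <= U by case/andP: (H U HU).
by apply/eqP; rewrite eq_le le //= ge.
Qed.

Definition inC (n m : int) (x : int) :=
  (0 <= x <= n-1) \/ (exists k, 0<=k<=m-1 /\ x = n + k*(n+1)) \/
  (exists t, 0 <= t <= n-1 /\ x = m*(n+1)+t).

Lemma memD1 N1 x : x \in D1 N1 <-> 0 <= x <= N1%:Z - 1.
Proof.
rewrite /D1 /irange mem_aprog //; split.
  case=> k [k0 [-> h]]; lia.
move=> h; exists x; lia.
Qed.

Lemma memD2 N1 N2 x : x \in D2 N1 N2 <->
  exists k, 0 <= k <= N2%:Z - 1 /\ x = k * (N1%:Z + 1).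
Proof.
rewrite /D2 mem_aprog //; split.
  case=> k [k0 [-> h]]; exists k; split; [nia|lia].
case=> k [hk ->]; exists k; split; [lia|split;[lia|nia]].
Qed.

Lemma memDCNA N1 N2 x : x \in DCNA N1 N2 <-> inC N1%:Z N2%:Z x.
Proof.
rewrite /DCNA /inC !mem_cat; split.
  case/orP=> [/memD1 h|/orP[/mem_shift[y /memD2[k [hk ->]] ->]|/mem_shift[y /memD1 h ->]]].
  - by left.
  - right; left; exists k; split; [lia|ring].
  - right; right; exists y; split; [lia|ring].
case=> [h|[[k [hk ->]]|[t [ht ->]]]].
- by apply/orP; left; apply/memD1.
- apply/orP; right; apply/orP; left; apply/mem_shift; exists (k * (N1%:Z + 1)); last ring.
  by apply/memD2; exists k.
- apply/orP; right; apply/orP; right; apply/mem_shift; exists t; last ring.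
  by apply/memD1.
Qed.

Lemma inC_bound n m x : 0 <= n -> 0 <= m -> inC n m x -> 0 <= x <= m*(n+1)+n-1.
Proof. move=> n0 m0 [h|[[k [hk ->]]|[t [ht ->]]]]; nia. Qed.

Lemma MCNAE N1 N2 : (N1, N2) <> (0%N, 0%N) ->
  MCNA N1 N2 = N2%:Z * (N1%:Z + 1) + N1%:Z - 1.
Proof.
move=> nz; apply: smax_eq.
  by move=> x /memDCNA /inC_bound; apply.
apply/memDCNA; case: N1 nz => [|n] nz.
  right; left; exists (N2%:Z - 1); split; [|ring].
  case: N2 nz => [|m] //= _; lia.
right; right; exists n%:Z; split; [lia|].
rewrite -addn1 PoszD; ring.
Qed.

Lemma divmod (a b : int) : 0 < b -> exists q r, a = q*b + r /\ 0 <= r < b.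
Proof.
move=> b0; exists (a %/ b)%Z, (a %% b)%Z; split; first exact: divz_eq.
rewrite modz_ge0 ?ltz_pmod //; last by rewrite gt_eqF.
Qed.

Lemma divmod0 (a b : int) : 0 <= a -> 0 < b -> exists q r, a = q*b + r /\ 0 <= r < b /\ 0 <= q.
Proof.
move=> a0 b0; case: (@divmod a b b0) => q [r [E h]]; exists q, r; split=>//; split=>//.
nia.
Qed.

Lemma inC_sym n m z : 0 <= n -> 0 <= m -> inC n m z -> inC n m (m*(n+1)+n-1 - z).
Proof.
move=> n0 m0 [h|[[k [hk ->]]|[t [ht ->]]]].
- right; right; exists (n-1-z); split; [lia|ring].
- right; left; exists (m-1-k); split; [lia|ring].
- left; lia.
Qed.

Lemma coverC n m d : 0 <= n -> 0 <= m -> 0 <= d <= m*(n+1)+n-1 ->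
  exists x y, [/\ inC n m x, inC n m y & d = x - y].
Proof.
move=> n0 m0 hd.
have n1 : 0 < n + 1 by lia.
have d0 : 0 <= d by lia.
case: (@divmod0 d (n+1) d0 n1) => q [r [E [hr q0]]].
have [hq|hq] : q <= m - 1 \/ m <= q by lia.
- case: (r =P 0) => [r0|rn0].
  + exists (n + q*(n+1)), (n + 0*(n+1)); split.
    * right; left; exists q; split; [lia|ring].
    * right; left; exists 0; split; [lia|ring].
    * rewrite E r0; ring.
  + exists (n + q*(n+1)), (n - r); split.
    * right; left; exists q; split; [lia|ring].
    * left; lia.
    * rewrite E; ring.
- have qm : q = m by nia.
  have rn : r <= n - 1 by nia.
  subst q.
  exists (m*(n+1) + r), 0; split.
  + right; right; exists r; split; [lia|ring].
  + left; nia.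
  + rewrite E; ring.
Qed.

Lemma coverS n m e : 0 <= n -> 0 <= m -> 0 <= e <= n*n + (m*(n+1)+n-1) ->
  exists j z, [/\ 0 <= j <= n, inC n m z & e = j*n + z].
Proof.
move=> n0 m0 he.
have [nz|np] : n = 0 \/ 0 < n by lia.
  subst n; exists 0, e; split; [lia| |ring].
  right; left; exists e; split; [lia|ring].
have [h1|[h2|h3]] : e <= n*n+n-1 \/ m*(n+1) <= e \/ (n*n+n <= e /\ e <= m*(n+1) - 1) by lia.
- have e0 : 0 <= e by lia.
  case: (@divmod0 e n e0 np) => q [r [E [hr q0]]].
  exists q, r; split; [nia|left; lia|lia].
- have e0 : 0 <= e - m*(n+1) by lia.
  case: (@divmod0 _ n e0 np) => q [r [E [hr q0]]].
  exists q, (m*(n+1)+r); split; [nia| |lia].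
  right; right; exists r; split; [lia|ring].
- have e0 : 0 <= e - n by lia.
  have n1 : 0 < n + 1 by lia.
  case: (@divmod0 _ (n+1) e0 n1) => q [r [E [hr q0]]].
  case: (r =P 0) => [r0|rn0].
  + exists 0, (n + q*(n+1)); split; [lia| |lia].
    right; left; exists q; split; [nia|ring].
  + exists (n+1-r), (n + (q+r-n)*(n+1)); split; [lia| |nia].
    right; left; exists (q+r-n); split; [nia|ring].
Qed.

Lemma memD3 N1 N2 N3 x : x \in D3 N1 N2 N3 <->
  exists j i, [/\ 0 <= j <= N1%:Z, 1 <= i <= N3%:Z &
    x = j * N1%:Z + (i-1) * (N1%:Z * N1%:Z + MCNA N1 N2 + 1)].
Proof.
rewrite /D3 /sumset; split.
  case/allpairsP=> [[a b] [ha hb ->]].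
  case/mapP: ha => j hj ->; case/mapP: hb => i hi ->.
  move: hj hi; rewrite !mem_iota => hj hi.
  exists j%:Z, i%:Z; split; [lia|lia|by rewrite expr2].
case=> j [i [hj hi ->]]; apply/allpairsP.
exists (j * N1%:Z, (i - 1) * (N1%:Z ^+ 2 + MCNA N1 N2 + 1)); split.
- apply/mapP; exists `|j|%N; first by rewrite mem_iota; lia.
  by rewrite gez0_abs //; lia.
- apply/mapP; exists `|i|%N; first by rewrite mem_iota; lia.
  by rewrite gez0_abs //; lia.
- by rewrite expr2.
Qed.

Theorem mainTheorem13 (N1 N2 N3 : nat) :
  (N1, N2) <> (0%N, 0%N) ->
  forall d : int,
    d \in diffset (GKMA N1 N2 N3) (GKMA N1 N2 N3) =
    (- smax (GKMA N1 N2 N3) <= d <= smax (GKMA N1 N2 N3)).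
Proof.
move=> nz d.
have nm : (0 < N1)%N \/ (0 < N2)%N.
  by case: N1 nz => [|k]; case: N2 => [|l] //= _; [right|left|left].
have M0E := @MCNAE N1 N2 nz.
set n := N1%:Z; set m := N2%:Z; set c := N3%:Z.
have n0 : 0 <= n by [].
have m0 : 0 <= m by [].
have c0 : 0 <= c by [].
set M0 := m * (n+1) + n - 1.
have M00 : 0 <= M0.
  rewrite /M0 /n /m; case: nm => h; nia.
set L := n * n + M0 + 1.
pose inG x := inC n m x \/ exists j i, [/\ 0 <= j <= n, 1 <= i <= c &
   x = j*n + (i-1)*L + (2*M0+1)].
have memG : forall x, x \in GKMA N1 N2 N3 <-> inG x.
  move=> x; rewrite /GKMA mem_cat /inG; split.
    case/orP=> [/memDCNA h|/mem_shift[y /memD3[j [i [hj hi ->]]] ->]]; first by left.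
    right; exists j, i; split=>//; rewrite M0E -/M0 -/L. done.
  case=> [h|[j [i [hj hi ->]]]]; apply/orP; [by left; apply/memDCNA|right].
  apply/mem_shift; exists (j*n + (i-1)*L); last by rewrite M0E.
  apply/memD3; exists j, i; split=>//; by rewrite M0E -/M0 -/L.
set U := M0 + c * L.
have bnd : forall x, inG x -> 0 <= x <= U.
  move=> x [/inC_bound h|[j [i [hj hi ->]]]]; first by move: (h n0 m0); nia.
  have : j * n <= n * n by nia.
  have : (i-1)*L <= (c-1)*L by nia.
  rewrite /U /L; nia.
have smaxE : smax (GKMA N1 N2 N3) = U.
  apply: smax_eq; first by move=> x /memG /bnd.
  apply/memG; have [c00|cp] : c = 0 \/ 1 <= c by lia.
    left; rewrite /U c00 mul0r addr0 /M0.
    have := @inC_sym n m 0 n0 m0.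
    rewrite subr0; apply.
    have [n00|np] : n = 0 \/ 0 < n by lia.
      right; left; exists 0; split; last by rewrite n00; ring.
      move: nm n00; rewrite /m /n; lia.
    by left; lia.
  right; exists n, c; split; [lia|lia|rewrite /U /L; ring].
rewrite smaxE.
have cover : forall d, 0 <= d <= U -> exists x y, [/\ inG x, inG y & d = x - y].
  move=> e he.
  have [hs|hb] : e <= M0 \/ M0 + 1 <= e by lia.
    have he' : 0 <= e <= m*(n+1)+n-1 by rewrite -/M0; lia.
    case: (@coverC n m e n0 m0 he') => x [y [hx hy E]].
    by exists x, y; split=>//; left.
  have e0 : 0 <= e - (M0 + 1) by lia.
  have L0 : 0 < L by rewrite /L; nia.
  case: (@divmod0 _ L e0 L0) => q [r [E [hr q0]]].
  have qc : q <= c - 1 by move: he; rewrite /U; nia.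
  have hr' : 0 <= r <= n*n + (m*(n+1)+n-1) by rewrite -/M0; move: hr; rewrite /L; lia.
  case: (@coverS n m r n0 m0 hr') => j [z [hj hz Ez]].
  exists (j*n + ((q+1)-1)*L + (2*M0+1)), (M0 - z); split.
  - right; exists j, (q+1); split; [lia|lia|done].
  - by left; apply: inC_sym.
  - lia.
apply/idP/idP.
  case/mem_diffset=> x [y [/memG/bnd hx /memG/bnd hy ->]]; lia.
move=> hd; apply/mem_diffset.
have [dp|dn] : 0 <= d \/ d < 0 by lia.
  have hd' : 0 <= d <= U by lia.
  case: (cover d hd') => x [y [hx hy E]].
  by exists x, y; split=>//; apply/memG.
have hd' : 0 <= - d <= U by lia.
case: (cover _ hd') => x [y [hx hy E]].
exists y, x; split; try by apply/memG.
lia.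
Qed.
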